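(* Let $a=\{a_k\}_{k=0}^\infty$ be a real sequence with $1=a_0>a_1\geq a_2\geq\cdots\geq a_{k-1}\geq a_k\geq\cdots$, $\lim_{k\to\infty}a_k=0$, and $\sum_{k=0}^\infty a_k=\infty$. Define $\{b_k\}_{k=0}^\infty$ by $b_0=1/a_0$ and $b_k=-\frac{1}{a_0}\sum_{j=0}^{k-1}a_{k-j}b_j$ for $k\geq1$. Then $\lim_{k\to\infty}b_k=0$.
   Context: The sequence $\{b_k\}$ gives the entries of the inverse $B=A^{-1}$ of the half-infinite lower triangular Toeplitz matrix $A$ with entries $A_{ij}=a_{i-j}$ for $i\geq j$ (and $0$ otherwise). *)

(* Defs.v *)
From Stdlib Require Import Reals.
From Coquelicot Require Import Coquelicot.
Open Scope R_scope.

Definition inverse_toeplitz_rec (a b : nat -> R) : Prop :=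
  b 0%nat = 1 / a 0%nat /\
  forall k : nat, (1 <= k)%nat ->
    b k = - (1 / a 0%nat) * sum_f_R0 (fun j => a (k - j)%nat * b j) (k - 1)%nat.

(* Main.v *)
Require Import Defs.
From Stdlib Require Import Reals Lra Lia.
From Coquelicot Require Import Coquelicot.
Open Scope R_scope.


Lemma sum_shift (g : nat -> R) n :
  sum_f_R0 g (S n) = g 0%nat + sum_f_R0 (fun k => g (S k)) n.
Proof. induction n; simpl in *; [ring| rewrite IHn; ring]. Qed.

Lemma sum_S (f : nat -> R) n : sum_f_R0 f (S n) = sum_f_R0 f n + f (S n).
Proof. reflexivity. Qed.

Lemma sum_nonneg (f : nat -> R) N :
  (forall k, (k <= N)%nat -> 0 <= f k) -> 0 <= sum_f_R0 f N.
Proof. induction N; intros H; simpl. apply H; lia.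
  assert (0 <= f (S N)) by (apply H; lia). assert (0 <= sum_f_R0 f N) by (apply IHN; intros; apply H; lia). lra. Qed.

Lemma sum_ext_zero (f : nat -> R) m N :
  (m <= N)%nat -> (forall k, (m < k)%nat -> f k = 0) -> sum_f_R0 f N = sum_f_R0 f m.
Proof. intros H Hz. induction N. replace m with 0%nat by lia; auto.
  destruct (Nat.eq_dec m (S N)) as [->|Hne]; auto.
  simpl. rewrite IHN by lia. rewrite Hz by lia. ring. Qed.

Lemma telescope (a : nat -> R) m j : (j <= m)%nat ->
  sum_f_R0 (fun k => a (m - k)%nat - a (S m - k)%nat) j = a (m - j)%nat - a (S m).
Proof. induction j; intros H. simpl. rewrite Nat.sub_0_r. ring.
  rewrite sum_S. rewrite IHj by lia. replace (S m - S j)%nat with (m - j)%nat by lia. ring. Qed.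

Lemma sum_prefix_le (f : nat -> R) K n : (K <= n)%nat -> (forall k, 0 <= f k) ->
  sum_f_R0 f K <= sum_f_R0 f n.
Proof. intros H Hf. induction n. replace K with 0%nat by lia; lra.
  destruct (Nat.eq_dec K (S n)) as [->|Hne]; [lra|]. simpl.
  specialize (IHn ltac:(lia)). specialize (Hf (S n)). lra. Qed.

Lemma sum_rev (f : nat -> R) n : sum_f_R0 (fun k => f (n - k)%nat) n = sum_f_R0 f n.
Proof. revert f; induction n; intros f. reflexivity.
  rewrite sum_shift. rewrite Nat.sub_0_r.
  rewrite (sum_eq _ (fun k => f (n - k)%nat)) by (intros; reflexivity).
  rewrite IHn. rewrite sum_S. ring. Qed.

Lemma T_id (a b : nat -> R) : a 0%nat = 1 -> inverse_toeplitz_rec a b ->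
  forall n, sum_f_R0 (fun k => a (n - k)%nat * sum_f_R0 b k) n = 1.
Proof.
  intros Ha0 [Hb0 Hb]. rewrite Ha0 in Hb0, Hb.
  assert (Hc : forall m, sum_f_R0 (fun j => a (S m - j)%nat * b j) (S m) = 0).
  { intros m. rewrite sum_S. rewrite Nat.sub_diag, Ha0.
    rewrite (Hb (S m)) by lia. simpl (S m - 1)%nat. rewrite Nat.sub_0_r. field. }
  induction n.
  - simpl. rewrite Ha0, Hb0. field.
  - rewrite sum_shift. rewrite Nat.sub_0_r. simpl (sum_f_R0 b 0).
    rewrite (sum_eq _ (fun k => a (n - k)%nat * sum_f_R0 b k + a (n-k)%nat * b (S k))).
    2:{ intros i _. simpl (S n - S i)%nat. rewrite sum_S. ring. }
    rewrite plus_sum, IHn.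
    specialize (Hc n). rewrite sum_shift, Nat.sub_0_r in Hc.
    rewrite (sum_eq _ (fun k => a (n-k)%nat * b (S k))) in Hc by (intros; reflexivity).
    lra.
Qed.

Lemma u_rec (a u : nat -> R) : a 0%nat = 1 ->
  (forall n, sum_f_R0 (fun k => a (n - k)%nat * u k) n = 1) ->
  forall m, u (S m) = sum_f_R0 (fun k => (a (m - k)%nat - a (S m - k)%nat) * u k) m.
Proof.
  intros Ha0 HT m. pose proof (HT (S m)) as H1. pose proof (HT m) as H2.
  rewrite sum_S, Nat.sub_diag, Ha0 in H1.
  rewrite (sum_eq _ (fun k => a (m - k)%nat * u k - a (S m - k)%nat * u k)) by (intros; ring).
  rewrite minus_sum. lra.
Qed.

Lemma a_mono (a : nat -> R) : a 0%nat > a 1%nat ->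
  (forall k : nat, (1 <= k)%nat -> a (S k) <= a k) ->
  forall n m, (n <= m)%nat -> a m <= a n.
Proof.
  intros H0 H1 n m Hnm. induction Hnm. lra.
  assert (a (S m) <= a m). { destruct m. lra. apply H1; lia. } lra.
Qed.

Lemma a_nonneg (a : nat -> R) : (forall n m, (n <= m)%nat -> a m <= a n) ->
  is_lim_seq a 0 -> forall n, 0 <= a n.
Proof.
  intros Hm Hl n. destruct (Rle_or_lt 0 (a n)) as [h|h]; auto. exfalso.
  apply is_lim_seq_spec in Hl. destruct (Hl (mkposreal (- a n) ltac:(lra))) as [N HN].
  specialize (HN (max N n) ltac:(lia)). specialize (Hm n (max N n) ltac:(lia)).
  simpl in HN. rewrite Rminus_0_r in HN. apply Rabs_def2 in HN. lra.
Qed.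

Lemma u_bounds (a u : nat -> R) : a 0%nat = 1 ->
  (forall n m, (n <= m)%nat -> a m <= a n) -> (forall n, 0 <= a n) ->
  (forall n, sum_f_R0 (fun k => a (n - k)%nat * u k) n = 1) ->
  forall n, 0 <= u n <= 1.
Proof.
  intros Ha0 Hm Hp HT.
  assert (Hnn : forall n, 0 <= u n).
  { intros n. induction n as [n IH] using (well_founded_induction Wf_nat.lt_wf). destruct n.
    - specialize (HT 0%nat). simpl in HT. rewrite Ha0 in HT. lra.
    - rewrite (u_rec a u Ha0 HT). apply sum_nonneg. intros k Hk.
      apply Rmult_le_pos. assert (a (S n - k)%nat <= a (n - k)%nat) by (apply Hm; lia). lra.
      apply IH; lia. }
  intros n; split; auto. destruct n.
  - specialize (HT 0%nat). simpl in HT. rewrite Ha0 in HT. lra.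
  - specialize (HT (S n)). rewrite sum_S, Nat.sub_diag, Ha0 in HT.
    assert (0 <= sum_f_R0 (fun k => a (S n - k)%nat * u k) n).
    { apply sum_nonneg; intros; apply Rmult_le_pos; auto. } lra.
Qed.

Lemma key_step (a u : nat -> R) (L : R) (M : nat) : a 0%nat = 1 ->
  (forall n m, (n <= m)%nat -> a m <= a n) -> (forall n, 0 <= a n) ->
  (forall n, sum_f_R0 (fun k => a (n - k)%nat * u k) n = 1) ->
  (forall n, 0 <= u n <= 1) -> 0 <= L -> (1 <= M)%nat ->
  (forall k, (M <= k)%nat -> u k <= L) ->
  forall p, (M <= S p)%nat ->
  u (S (S p)) <= (1 - a 1%nat) * u (S p) + L * a 1%nat + a (S (S p) - M)%nat.
Proof.
  intros Ha0 Hm Hp HT Hu HL HM HuL p Hp1.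
  set (g := fun k => a (S p - k)%nat - a (S (S p) - k)%nat).
  assert (Hg : forall k, (k <= S p)%nat -> 0 <= g k).
  { intros k Hk; unfold g. assert (a (S (S p) - k)%nat <= a (S p - k)%nat) by (apply Hm; lia). lra. }
  rewrite (u_rec a u Ha0 HT (S p)). rewrite sum_S.
  replace (S p - S p)%nat with 0%nat by lia. replace (S (S p) - S p)%nat with 1%nat by lia.
  rewrite Ha0.
  set (ind := fun k => if (k <? M)%nat then 1 else 0).
  assert (H1 : sum_f_R0 (fun k => (a (S p - k)%nat - a (S (S p) - k)%nat) * u k) p <=
               sum_f_R0 (fun k => g k * L + g k * ind k) p).
  { apply sum_Rle. intros k Hk. fold (g k). unfold ind.
    destruct (Nat.ltb_spec k M).
    - pose proof (Hu k). pose proof (Hg k ltac:(lia)). nra.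
    - pose proof (HuL k H). pose proof (Hg k ltac:(lia)). nra. }
  rewrite plus_sum, <- scal_sum in H1.
  assert (H2 : sum_f_R0 g p = a 1%nat - a (S (S p))).
  { unfold g. rewrite telescope by lia. replace (S p - p)%nat with 1%nat by lia. reflexivity. }
  assert (H3 : sum_f_R0 (fun k => g k * ind k) p = a (S (S p) - M)%nat - a (S (S p))).
  { rewrite (sum_ext_zero _ (M - 1)%nat).
    2: lia.
    2:{ intros k Hk. unfold ind. destruct (Nat.ltb_spec k M). lia. ring. }
    rewrite (sum_eq _ g). unfold g. rewrite telescope by lia.
    replace (S p - (M - 1))%nat with (S (S p) - M)%nat by lia. reflexivity.
    intros k Hk. unfold ind. destruct (Nat.ltb_spec k M); [ring|lia]. }
  rewrite H2, H3 in H1. pose proof (Hp (S (S p))). pose proof (Hu (S p)).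
  assert (0 <= L * a (S (S p))) by (apply Rmult_le_pos; auto).
  lra.
Qed.

Theorem corollary1 (a b : nat -> R) :
  a 0%nat = 1 ->
  a 0%nat > a 1%nat ->
  (forall k : nat, (1 <= k)%nat -> a (S k) <= a k) ->
  is_lim_seq a 0 ->
  is_lim_seq (sum_n a) p_infty ->
  inverse_toeplitz_rec a b ->
  is_lim_seq b 0.
Proof.
  intros Ha0 Ha1 Hdec Hlim Hdiv Hrec.
  set (u := fun n => sum_f_R0 b n).
  assert (HT : forall n, sum_f_R0 (fun k => a (n - k)%nat * u k) n = 1) by exact (T_id a b Ha0 Hrec).
  pose proof (a_mono a Ha1 Hdec) as Hm.
  pose proof (a_nonneg a Hm Hlim) as Hp.
  pose proof (u_bounds a u Ha0 Hm Hp HT) as Hu.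
  assert (Hu0 : is_lim_seq u 0).
  { destruct (ex_LimSup_seq u) as [l Hl]. destruct l as [lam| |].
    2:{ exfalso. destruct (Hl 2 0%nat) as [n [_ Hn]]. specialize (Hu n). lra. }
    2:{ exfalso. destruct (Hl 0) as [N HN]. specialize (HN N (le_n N)). specialize (Hu N). lra. }
    assert (Hlam : lam <= 0).
    { destruct (Rle_or_lt lam 0) as [h|Hpos]; auto. exfalso.
      set (c := 1 - a 1%nat).
      assert (Hc : 0 < c) by (unfold c; lra).
      assert (Hc1 : c <= 1) by (unfold c; specialize (Hp 1%nat); lra).
      set (q := 3 / c).
      assert (Hq : 1 <= q).
      { unfold q. apply (Rmult_le_reg_l c); auto. replace (c * (3/c)) with 3 by (field; lra). lra. }
      apply is_lim_seq_spec in Hdiv. destruct (Hdiv (4 / lam)) as [K HK].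
      specialize (HK K (le_n K)). rewrite sum_n_Reals in HK.
      assert (HqK : 0 < q ^ K) by (apply pow_lt; lra).
      set (eta := lam / 2 / q ^ K).
      assert (Heta : 0 < eta) by (unfold eta; apply Rdiv_lt_0_compat; lra).
      assert (Hrho : forall j, (j <= K)%nat -> q ^ j * eta <= lam / 2).
      { intros j Hj. unfold eta. pose proof (Rle_pow q j K Hq Hj).
        replace (q ^ j * (lam / 2 / q ^ K)) with ((q ^ j / q ^ K) * (lam/2)) by (field; lra).
        assert (q ^ j / q ^ K <= 1).
        { apply (Rmult_le_reg_r (q ^ K)); auto. replace (q ^ j / q ^ K * q ^ K) with (q ^ j) by (field; lra). lra. }
        assert (0 <= q ^ j / q ^ K) by (apply Rdiv_le_0_compat; [apply pow_le; lra| lra]).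
        nra. }
      destruct (Hl (mkposreal eta Heta)) as [Hinf [M0 HM0]]. simpl in Hinf, HM0.
      set (M := max 1 M0).
      apply is_lim_seq_spec in Hlim. destruct (Hlim (mkposreal eta Heta)) as [N1 HN1].
      simpl in HN1.
      destruct (Hinf (M + N1 + K + 2)%nat) as [n [Hn Hun]].
      assert (Hclaim : forall j, (j <= K)%nat -> lam - q ^ j * eta <= u (n - j)%nat).
      { induction j as [|j IH]; intros Hj.
        - rewrite Nat.sub_0_r. simpl. lra.
        - specialize (IH ltac:(lia)).
          pose proof (key_step a u (lam + eta) M Ha0 Hm Hp HT Hu ltac:(lra) ltac:(lia)) as KS.
          assert (HuL : forall k, (M <= k)%nat -> u k <= lam + eta).
          { intros k Hk. specialize (HM0 k ltac:(lia)). lra. }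
          specialize (KS HuL (n - j - 2)%nat ltac:(lia)).
          replace (S (S (n - j - 2))) with (n - j)%nat in KS by lia.
          replace (S (n - j - 2)) with (n - S j)%nat in KS by lia.
          assert (Han : a (n - j - M)%nat <= eta).
          { specialize (HN1 (n - j - M)%nat ltac:(lia)). rewrite Rminus_0_r in HN1.
            apply Rabs_def2 in HN1. lra. }
          assert (Hqj : 1 <= q ^ j) by (apply pow_R1_Rle; lra).
          set (Q := q ^ j * eta) in *.
          assert (HQ : eta <= Q) by (unfold Q; nra).
          assert (Hcx : c * u (n - S j)%nat >= c * lam - 3 * Q).
          { unfold c in *. nra. }
          replace (q ^ S j * eta) with (3 * Q / c) by (unfold Q, q; simpl; field; lra).
          apply (Rmult_le_reg_l c); auto.
          replace (c * (lam - 3 * Q / c)) with (c * lam - 3 * Q) by (field; lra). lra. }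
      assert (HT' : sum_f_R0 (fun j => a j * u (n - j)%nat) n = 1).
      { rewrite <- (sum_rev (fun j => a j * u (n - j)%nat)). rewrite <- (HT n).
        apply sum_eq. intros i Hi. replace (n - (n - i))%nat with i by lia. reflexivity. }
      clear HT. rename HT' into HT.
      assert (Hpre : sum_f_R0 (fun j => a j * u (n - j)%nat) K <= 1).
      { rewrite <- HT. apply sum_prefix_le. lia. intros k. apply Rmult_le_pos; auto. apply Hu. }
      assert (Hlow : sum_f_R0 (fun j => a j * (lam / 2)) K <= sum_f_R0 (fun j => a j * u (n - j)%nat) K).
      { apply sum_Rle. intros j Hj. apply Rmult_le_compat_l; auto.
        specialize (Hclaim j Hj). specialize (Hrho j Hj). lra. }
      rewrite <- scal_sum in Hlow.
      assert (lam / 2 * (4 / lam) = 2) by (field; lra).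
      assert (lam / 2 * (4 / lam) < lam / 2 * sum_f_R0 a K) by (apply Rmult_lt_compat_l; lra).
      lra. }
    apply is_lim_seq_spec. intros eps. destruct (Hl eps) as [_ [N HN]].
    exists N. intros n Hn. specialize (HN n Hn). specialize (Hu n).
    rewrite Rminus_0_r, Rabs_pos_eq by lra. pose proof (cond_pos eps). lra. }
  apply is_lim_seq_incr_1.
  apply (is_lim_seq_ext (fun n => u (S n) - u n)).
  { intros n. unfold u. rewrite sum_S. ring. }
  replace (Finite 0) with (Finite (0 - 0)) by (f_equal; ring).
  apply is_lim_seq_minus'; auto. apply (is_lim_seq_incr_1 u 0). auto.
Qed.
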